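(* For every Boolean matrix $I\in\{0,1\}^{n\times m}$, $\mathrm{rank}_\mathrm{B}(I)\leq\mathrm{rank}_\mathrm{B}(\mathcal{E}(I))$.
   Context: $\mathrm{rank}_\mathrm{B}(K)$ (Boolean rank) of $K\in\{0,1\}^{n\times m}$ is the least $k$ for which there exist $A\in\{0,1\}^{n\times k}$, $B\in\{0,1\}^{k\times m}$ with $K=A\circ B$, where $(A\circ B)_{ij}=\max_{l=1}^k\min(A_{il},B_{lj})$. With $X=\{1,\dots,n\}$, $Y=\{1,\dots,m\}$ and for $C\subseteq X$, $D\subseteq Y$: $C^{\uparrow}=\{j\mid \forall i\in C: I_{ij}=1\}$, $D^{\downarrow}=\{i\mid \forall j\in D: I_{ij}=1\}$; $\mathcal{B}(I)=\{\langle C,D\rangle\mid C^\uparrow=D, D^\downarrow=C\}$ ordered by inclusion of first components; $\gamma(i)=\langle\{i\}^{\uparrow\downarrow},\{i\}^\uparrow\rangle$, $\mu(j)=\langle\{j\}^\downarrow,\{j\}^{\downarrow\uparrow}\rangle$, $\mathcal{I}_{ij}=\{c\in\mathcal{B}(I)\mid\gamma(i)\leq c\leq\mu(j)\}$. $\mathcal{E}(I)\in\{0,1\}^{n\times m}$ is defined by $\mathcal{E}(I)_{ij}=1$ iff $\mathcal{I}_{ij}$ is non-empty and minimal w.r.t. $\subseteq$ among the non-empty sets $\mathcal{I}_{i'j'}$. *)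

(* Defs.v *)
From mathcomp Require Import all_boot all_order all_algebra.
Set Implicit Arguments. Unset Strict Implicit. Unset Printing Implicit Defensive.

Definition bmul (n k m : nat) (A : 'M[bool]_(n, k)) (B : 'M[bool]_(k, m))
  : 'M[bool]_(n, m) := \matrix_(i < n, j < m) [exists l : 'I_k, A i l && B l j].

Definition bfact (n m : nat) (K : 'M[bool]_(n, m)) (k : nat) : bool :=
  [exists A : 'M[bool]_(n, k), exists B : 'M[bool]_(k, m), K == bmul A B].

Definition bid (m : nat) : 'M[bool]_(m, m) := \matrix_(l < m, j < m) (l == j).

Lemma bfact_exists (n m : nat) (K : 'M[bool]_(n, m)) : exists k, bfact K k.
Proof.
exists m; apply/existsP; exists K; apply/existsP; exists (bid m).
apply/eqP/matrixP => i j; rewrite !mxE.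
apply/idP/existsP => [Kij|[l /andP[Kil]]].
  by exists j; rewrite Kij mxE eqxx.
by rewrite mxE => /eqP <-.
Qed.

Definition rankB (n m : nat) (K : 'M[bool]_(n, m)) : nat :=
  ex_minn (bfact_exists K).

Section FCA.
Variables (n m : nat) (I : 'M[bool]_(n, m)).

Definition up (C : {set 'I_n}) : {set 'I_m} := [set j | [forall i in C, I i j]].
Definition down (D : {set 'I_m}) : {set 'I_n} := [set i | [forall j in D, I i j]].

Definition is_concept (c : {set 'I_n} * {set 'I_m}) : bool :=
  (up c.1 == c.2) && (down c.2 == c.1).

(* order on B(I): inclusion of extents *)
Definition cle (c d : {set 'I_n} * {set 'I_m}) : bool := c.1 \subset d.1.

Definition gammaC (i : 'I_n) : {set 'I_n} * {set 'I_m} :=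
  (down (up [set i]), up [set i]).
Definition muC (j : 'I_m) : {set 'I_n} * {set 'I_m} :=
  (down [set j], up (down [set j])).

Definition interval (i : 'I_n) (j : 'I_m) : {set {set 'I_n} * {set 'I_m}} :=
  [set c | is_concept c && cle (gammaC i) c && cle c (muC j)].

Definition Emat : 'M[bool]_(n, m) :=
  \matrix_(i < n, j < m)
    ((interval i j != set0) &&
     [forall i' : 'I_n, forall j' : 'I_m,
        ((interval i' j' != set0) && (interval i' j' \subset interval i j))
        ==> (interval i j \subset interval i' j')]).

End FCA.

(* Main.v *)
Require Import Defs.
From mathcomp Require Import all_boot all_order all_algebra.
Set Implicit Arguments. Unset Strict Implicit. Unset Printing Implicit Defensive.

Section Aux.
Variables (n m : nat) (I : 'M[bool]_(n, m)).

Lemma galois (C : {set 'I_n}) (D : {set 'I_m}) :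
  (C \subset down I D) = (D \subset up I C).
Proof.
apply/subsetP/subsetP => H x Hx; rewrite inE; apply/forallP => y;
  apply/implyP => Hy; have := H y Hy; rewrite inE => /forallP/(_ x)/implyP;
  exact.
Qed.

Lemma down_anti (D D' : {set 'I_m}) : D \subset D' -> down I D' \subset down I D.
Proof.
move=> /subsetP H; apply/subsetP => x; rewrite !inE => /forallP Hx.
apply/forallP => y; apply/implyP => Hy; exact: (implyP (Hx y) (H y Hy)).
Qed.

Lemma up_anti (C C' : {set 'I_n}) : C \subset C' -> up I C' \subset up I C.
Proof.
move=> /subsetP H; apply/subsetP => x; rewrite !inE => /forallP Hx.
apply/forallP => y; apply/implyP => Hy; exact: (implyP (Hx y) (H y Hy)).
Qed.

Lemma up_down_up (C : {set 'I_n}) : up I (down I (up I C)) = up I C.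
Proof.
apply/eqP; rewrite eqEsubset; apply/andP; split.
  by apply: up_anti; rewrite galois.
by rewrite -galois.
Qed.

Lemma interval_mem (i : 'I_n) (j : 'I_m) (D : {set 'I_m}) :
  ((down I D, up I (down I D)) \in Defs.interval I i j) =
  (i \in down I D) && (j \in up I (down I D)).
Proof.
rewrite inE /is_concept /cle /gammaC /muC /=.
have -> : down I (up I (down I D)) = down I D.
  apply/eqP; rewrite eqEsubset; apply/andP; split.
    by apply: down_anti; rewrite -galois.
  by rewrite galois.
rewrite !eqxx /=; congr (_ && _).
  by rewrite galois up_down_up -galois sub1set.
by rewrite galois sub1set.
Qed.

Lemma interval_shape (i : 'I_n) (j : 'I_m) c : c \in Defs.interval I i j ->
  exists D, c = (down I D, up I (down I D)).
Proof.
rewrite inE /is_concept => /andP [/andP [/andP [/eqP H1 /eqP H2] _] _].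
exists c.2; rewrite H2 H1; by case: c {H1 H2}.
Qed.

Lemma interval_I (i : 'I_n) (j : 'I_m) : Defs.interval I i j != set0 -> I i j.
Proof.
case/set0Pn => c Hc; have [D HD] := interval_shape Hc; move: Hc.
rewrite HD interval_mem => /andP [Hi]; rewrite inE => /forallP/(_ i)/implyP.
exact.
Qed.

Lemma I_interval (i : 'I_n) (j : 'I_m) : I i j -> Defs.interval I i j != set0.
Proof.
move=> Hij; apply/set0Pn; exists (down I [set j], up I (down I [set j])).
rewrite interval_mem; apply/andP; split.
  by rewrite inE; apply/forallP => y; apply/implyP; rewrite inE => /eqP ->.
by rewrite -sub1set -galois.
Qed.

Lemma minimal_exists (i : 'I_n) (j : 'I_m) : Defs.interval I i j != set0 ->
  exists i', exists j', Emat I i' j' /\ Defs.interval I i' j' \subset Defs.interval I i j.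
Proof.
have [s Hs] : exists s, #|Defs.interval I i j| <= s by exists #|Defs.interval I i j|.
elim: s i j Hs => [|s IH] i j Hs Hne.
  by move: Hs; rewrite leqn0 cards_eq0 => /eqP HH; rewrite HH eqxx in Hne.
case E: (Emat I i j); first by exists i, j; split.
move: E; rewrite mxE Hne /= => /negbT; rewrite negb_forall => /existsP [i'].
rewrite negb_forall => /existsP [j']; rewrite negb_imply.
move=> /andP [/andP [Hne' Hsub] Hnsub].
have Hpr : Defs.interval I i' j' \proper Defs.interval I i j by rewrite properE Hsub.
have Hc := proper_card Hpr.
have [i'' [j'' [HE Hs']]] := IH i' j' (leq_trans (leq_trans Hc Hs) (leqnn _)) Hne'.
exists i'', j''; split => //; exact: subset_trans Hs' Hsub.
Qed.

End Aux.

Theorem theorem4 (n m : nat) (I : 'M[bool]_(n, m)) :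
  rankB I <= rankB (Emat I).
Proof.
rewrite /rankB.
case: (ex_minnP (bfact_exists (Emat I))) => k Hk _.
case: (ex_minnP (bfact_exists I)) => r _ Hmin; apply: Hmin.
move/existsP: Hk => [A /existsP [B /eqP HE]].
pose Dl (l : 'I_k) := [set j | B l j].
apply/existsP; exists ((\matrix_(i < n, l < k) (i \in down I (Dl l))) )%R.
apply/existsP; exists ((\matrix_(l < k, j < m) (j \in up I (down I (Dl l)))) )%R.
apply/eqP/matrixP => i j; rewrite !mxE; apply/idP/existsP.
  move=> Hij; have [i' [j' [HEij Hsub]]] := minimal_exists (I_interval Hij).
  move: HEij; rewrite HE mxE => /existsP [l /andP [Ail Blj]].
  have Hc : (down I (Dl l), up I (down I (Dl l))) \in Defs.interval I i' j'.
    rewrite interval_mem; apply/andP; split.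
      rewrite inE; apply/forallP => y; apply/implyP; rewrite inE => Bly.
      apply: interval_I; apply: (@I_interval _ _ I) => //.
      have : Emat I i' y by rewrite HE mxE; apply/existsP; exists l; rewrite Ail.
      rewrite mxE => /andP [H _]; exact: interval_I.
    have : j' \in Dl l by rewrite inE.
    by apply/subsetP; rewrite -galois.
  have := subsetP Hsub _ Hc; rewrite interval_mem => /andP [H1 H2].
  by exists l; rewrite !mxE H1 H2.
move=> [l]; rewrite !mxE => /andP [H1]; rewrite inE => /forallP/(_ i)/implyP.
exact.
Qed.
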